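(* Let $D$ be a poset whose order takes values in a universe $\mathcal T$, and $\mathcal V$ a universe. The relation $\sqsubseteq$ on $\mathcal L_{\mathcal V}(D)$, valued in $\mathcal V\sqcup\mathcal T$, given by $(P,\varphi)\sqsubseteq(Q,\psi) :\equiv \Sigma_{f:P\to Q}\,\Pi_{p:P}\,\big(\varphi(p)\sqsubseteq_D\psi(f(p))\big)$, is a partial order on $\mathcal L_{\mathcal V}(D)$.
   Context: Setting: intensional Martin-Löf type theory with universes, function extensionality, propositional extensionality and propositional truncations; no resizing, excluded middle or choice. A poset is a type with a proposition-valued reflexive, transitive, antisymmetric relation; a partial order is such a relation. The lifting is $\mathcal L_{\mathcal V}(D) :\equiv \Sigma_{P:\Omega_{\mathcal V}}(P\to D)$, where $\Omega_{\mathcal V}$ is the type of propositions in $\mathcal V$. *)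

(* Defs.v *)
Definition isProp (A : Type) : Type := forall x y : A, x = y.

Record is_partial_order {X : Type} (R : X -> X -> Type) : Type := {
  po_prop    : forall x y : X, isProp (R x y);
  po_refl    : forall x : X, R x x;
  po_trans   : forall x y z : X, R x y -> R y z -> R x z;
  po_antisym : forall x y : X, R x y -> R y x -> x = y
}.

(* The lifting L_V(D) := Σ (P : Ω_V), (P -> D), with Ω_V rendered as Prop. *)
Definition lifting (D : Type) : Type := { P : Prop & P -> D }.

Definition lift_le {D : Type} (le : D -> D -> Type) (u v : lifting D) : Type :=
  { f : projT1 u -> projT1 v & forall p : projT1 u, le (projT2 u p) (projT2 v (f p)) }.

(* Main.v *)
Require Import Defs.
From Stdlib Require Import FunctionalExtensionality ProofIrrelevance PropExtensionality.

Theorem proposition5p19 (D : Type) (le : D -> D -> Type) :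
  is_partial_order le -> is_partial_order (lift_le le).
Proof.
  intros [Hp Hr Ht Ha]. split.
  - intros [P phi] [Q psi] [f Hf] [g Hg]; simpl in *.
    assert (f = g) by (apply functional_extensionality; intros; apply proof_irrelevance).
    subst g. f_equal. apply functional_extensionality_dep; intros p. apply Hp.
  - intros [P phi]. exists (fun p => p). intros p. apply Hr.
  - intros [P phi] [Q psi] [R chi] [f Hf] [g Hg]; simpl in *.
    exists (fun p => g (f p)). intros p. simpl. exact (Ht _ _ _ (Hf p) (Hg (f p))).
  - intros [P phi] [Q psi] [f Hf] [g Hg]; simpl in *.
    assert (E : P = Q) by (apply propositional_extensionality; split; assumption).
    subst Q.
    assert (Hfe : forall p, f p = p) by (intros; apply proof_irrelevance).
    assert (Hge : forall p, g p = p) by (intros; apply proof_irrelevance).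
    assert (phi = psi).
    { apply functional_extensionality; intros p.
      apply Ha.
      - rewrite <- (Hfe p) at 2. apply Hf.
      - rewrite <- (Hge p) at 2. apply Hg. }
    subst psi. reflexivity.
Qed.
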